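(* Let $\Sigma$ be a finite graph and $f$ an integer-valued function on its vertices. Then there exists a finite graph $\Gamma$ containing $\Sigma$ as an induced subgraph (a motif) such that $1$ is an eigenvalue of the normalized Laplacian of $\Gamma$, with an eigenfunction coinciding with $f$ on the vertices of $\Sigma$.
   Context: For a finite simple graph without isolated vertices, write $i\sim j$ for adjacency and $n_i$ for the degree of $i$. The normalized Laplacian acts on real functions $v$ on the vertices by $\Delta v(i)=v(i)-\frac{1}{n_i}\sum_{j\sim i}v(j)$; $\lambda$ is an eigenvalue with eigenfunction $u$ if $u\not\equiv 0$ and $\frac{1}{n_i}\sum_{j\sim i}u(j)=(1-\lambda)u(i)$ for all $i$. For $\lambda=1$ this says $\sum_{j\sim i}u(j)=0$ for every vertex $i$. *)

(* Defs.v *)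
From mathcomp Require Import all_boot all_order all_algebra.
From mathcomp Require Import reals.
Set Implicit Arguments. Unset Strict Implicit. Unset Printing Implicit Defensive.
Import Order.TTheory GRing.Theory Num.Theory.
Local Open Scope ring_scope.

Definition simple_graph (T : finType) (e : rel T) : Prop :=
  (forall x y, e x y = e y x) /\ (forall x, ~~ e x x).

Definition no_isolated (T : finType) (e : rel T) : Prop :=
  forall x, exists y, e x y.

Definition degree (T : finType) (e : rel T) (i : T) : nat := #|[set j | e i j]|.

(* lambda is an eigenvalue of the normalized Laplacian with eigenfunction u:
   u not identically zero and (1/n_i) sum_{j ~ i} u(j) = (1 - lambda) u(i). *)
Definition nl_eigenpair (R : realType) (T : finType) (e : rel T)
    (lambda : R) (u : T -> R) : Prop :=
  (exists i, u i != 0) /\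
  forall i, (degree e i)%:R^-1 * (\sum_(j | e i j) u j) = (1 - lambda) * u i.

Definition induced_embedding (S T : finType) (eS : rel S) (eT : rel T)
    (phi : S -> T) : Prop :=
  injective phi /\ forall x y, eT (phi x) (phi y) = eS x y.

(* Main.v *)
Require Import Defs.
From mathcomp Require Import all_boot all_order all_algebra.
From mathcomp Require Import reals.
Import GRing.Theory Num.Theory.
Local Open Scope ring_scope.

Section Constr.
Variable (S : finType) (eS : rel S).

Definition eo (a b : option S) : bool :=
  match a, b with Some x, Some y => eS x y | _, _ => false end.

Definition Tt := ((option S * bool) * bool)%type.

Definition eT (p q : Tt) : bool :=
  if p.1.2 then (if q.1.2 then false else p.1.1 == q.1.1)
  else (if q.1.2 then p.1.1 == q.1.1 else eo p.1.1 q.1.1).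

Lemma sum_split (R : realType) (F : Tt -> R) :
  \sum_q F q = \sum_(a : option S)
     (F (a,false,false) + F (a,false,true) + (F (a,true,false) + F (a,true,true))).
Proof.
have -> : \sum_q F q = \sum_(ab : option S * bool) \sum_(c : bool) F (ab, c).
  by rewrite pair_big /=; apply: eq_bigr => -[[? ?] ?].
have -> : \sum_(ab : option S * bool) \sum_(c : bool) F (ab, c) =
  \sum_(a : option S) \sum_(b : bool) \sum_(c : bool) F (a, b, c).
  by rewrite [RHS]pair_big /=; apply: eq_bigr => -[? ?].
apply: eq_bigr => a _; rewrite !big_bool /= addrC; congr (_ + _); by rewrite addrC.
Qed.
End Constr.

Theorem theorem7 (R : realType) (S : finType) (eS : rel S) (f : S -> int) :
  simple_graph eS ->
  exists (T : finType) (eT : rel T) (phi : S -> T) (u : T -> R),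
    [/\ simple_graph eT, no_isolated eT, induced_embedding eS eT phi,
        nl_eigenpair eT 1 u & forall x, u (phi x) = (f x)%:~R].
Proof.
move=> [Hsym Hirr].
pose fo (a : option S) : R := if a is Some x then (f x)%:~R else 0.
pose u (p : Tt S) : R :=
  if p.1.2 then (if p.2 then 1 else -1) else (if p.2 then fo p.1.1 else - fo p.1.1).
exists (Tt S), (@eT S eS), (fun x => (Some x, false, true)), u.
split.
- split.
  + move=> [[a b] c] [[a' b'] c']; rewrite /eT /eo /=.
    case: b; case: b' => //=; try by rewrite eq_sym.
    by case: a; case: a' => //=.
  + move=> [[a b] c]; rewrite /eT /eo /=; case: b => //.
    by case: a => //= x; rewrite Hirr.
- move=> [[a b] c]; case: b.
  + by exists (a, false, true); rewrite /eT /eo /= eqxx.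
  + by exists (a, true, true); rewrite /eT /eo /= eqxx.
- split; first by move=> x y [].
  by [].
- split.
  + by exists (None, true, true); rewrite /u /= oner_neq0.
  + move=> p; rewrite subrr mul0r big_mkcond /= sum_split.
    rewrite big1 ?mulr0 // => a _.
    case: p => [[b bb] c]; rewrite /eT /u /=; case: bb => /=.
    * by case: (b == a); rewrite ?addr0 // addNr.
    * by case: (eo S eS b a); case: (b == a); rewrite ?addr0 ?add0r // addNr ?add0r ?addr0 // addNr.
- by [].
Qed.
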